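(* For every $n\ge 1$ and every real $\kappa>\frac{n}{2n-1}$ there exists a doubly stochastic $n\times n$ matrix $\mathcal M_\kappa$ such that no directed $(2n-1)$-regular multigraph on $[n]$ has direct throughput at least $\kappa$ with respect to $\mathcal M_\kappa$.
   Context: Let $n\ge 1$ and $[n]=\{1,\dots,n\}$. Networks are finite directed multigraphs on vertex set $[n]$; self-loops and parallel arcs are allowed. A directed multigraph is directed $r$-regular if every vertex has exactly $r$ outgoing and exactly $r$ incoming arcs (a self-loop at $v$ counts as one outgoing and one incoming arc of $v$). An $n\times n$ matrix is doubly stochastic if all entries are nonnegative and every row and every column sums to $1$. In a directed $(2n-1)$-regular multigraph $G$ on $[n]$ every arc has capacity $\frac{1}{2n-1}$. $G$ directly hosts a nonnegative $n\times n$ matrix $\mathcal M=(a_{i,j})$ if $a_{u,v}\le \frac{m_{u,v}}{2n-1}$ for all $u,v\in[n]$, where $m_{u,v}$ is the number of arcs from $u$ to $v$ in $G$ (i.e., all demand can be routed on single arcs within capacities). The direct throughput of $G$ with respect to a doubly stochastic $\mathcal M$ is the largest $\theta$ such that $G$ directly hosts $\theta\mathcal M$. *)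

(* Defs.v *)
From HB Require Import structures.
From mathcomp Require Import all_boot all_order all_algebra.
From mathcomp Require Import classical_sets reals.
Set Implicit Arguments. Unset Strict Implicit. Unset Printing Implicit Defensive.
Import Order.TTheory GRing.Theory Num.Theory.
Local Open Scope ring_scope.
Local Open Scope classical_set_scope.

(* A finite directed multigraph on [n] (vertex i+1 is represented by i : 'I_n),
   self-loops and parallel arcs allowed, is given by its arc-multiplicity
   matrix: G u v = number of arcs from u to v. *)
Definition multigraph (n : nat) := 'M[nat]_n.

Definition directed_regular (n r : nat) (G : multigraph n) : Prop :=
  (forall u : 'I_n, (\sum_(v < n) G u v)%N = r) /\
  (forall v : 'I_n, (\sum_(u < n) G u v)%N = r).

Definition doubly_stochastic (R : realType) (n : nat) (M : 'M[R]_n) : Prop :=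
  (forall i j, 0 <= M i j) /\
  (forall i, \sum_(j < n) M i j = 1) /\
  (forall j, \sum_(i < n) M i j = 1).

Definition directly_hosts (R : realType) (n : nat) (G : multigraph n)
    (A : 'M[R]_n) : Prop :=
  (forall u v, 0 <= A u v) /\
  (forall u v, A u v <= (G u v)%:R / (2 * n - 1)%:R).

Definition direct_throughput (R : realType) (n : nat) (G : multigraph n)
    (M : 'M[R]_n) : R :=
  sup [set theta : R | directly_hosts G (theta *: M)].

(* Main.v *)
Require Import Defs.
From HB Require Import structures.
From mathcomp Require Import all_boot all_order all_algebra.
From mathcomp Require Import classical_sets reals.
From mathcomp Require Import zify.
Import Order.TTheory GRing.Theory Num.Theory.
Local Open Scope ring_scope.

Lemma small_entry (n : nat) (hn : (1 <= n)%N) (G : multigraph n) (u : 'I_n) :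
  (\sum_(v < n) G u v)%N = (2 * n - 1)%N -> exists v, (G u v <= 1)%N.
Proof.
move=> hs; case: (boolP [exists v, (G u v <= 1)%N]) => [/existsP //|].
rewrite negb_exists => /forallP hall; exfalso.
have : (\sum_(v < n) 2 <= \sum_(v < n) G u v)%N.
  by apply: leq_sum => v _; have := hall v; rewrite -ltnNge.
rewrite hs sum_nat_const card_ord; lia.
Qed.

Theorem proposition3p6 (R : realType) (n : nat) (hn : (1 <= n)%N) (kappa : R)
    (hk : n%:R / (2 * n - 1)%:R < kappa) :
  exists M : 'M[R]_n, doubly_stochastic M /\
    forall G : multigraph n, directed_regular (2 * n - 1) G ->
      ~ (kappa <= direct_throughput G M).
Proof.
have n0 : (n%:R : R) != 0 by rewrite pnatr_eq0 -lt0n.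
have n0' : (0 : R) < n%:R by rewrite ltr0n.
have d0 : (0 : R) < (2 * n - 1)%:R by rewrite ltr0n; lia.
exists (const_mx (n%:R)^-1); split.
  split; first by move=> i j; rewrite mxE invr_ge0 ler0n.
  split.
    move=> i; rewrite (eq_bigr (fun=> n%:R^-1)) => [|j _]; last by rewrite mxE.
    by rewrite sumr_const card_ord -[_ *+ n]mulr_natr mulVf.
  move=> j; rewrite (eq_bigr (fun=> n%:R^-1)) => [|i _]; last by rewrite mxE.
  by rewrite sumr_const card_ord -[_ *+ n]mulr_natr mulVf.
move=> G [hrow _] hle.
have [u0 _] : exists u : 'I_n, True by exists (@Ordinal n 0 hn).
have [v hv] := @small_entry n hn G u0 (hrow u0).
have : direct_throughput G (const_mx (n%:R : R)^-1) <= (n%:R : R) / (2 * n - 1)%:R.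
  rewrite /direct_throughput.
  apply: ge_sup.
    exists 0; split => [u w|u w]; rewrite !mxE mul0r //.
    by rewrite divr_ge0 ?ler0n.
  move=> th [_ hb]; have := hb u0 v; rewrite !mxE => h.
  have h1 : th * (n%:R)^-1 <= 1 / (2 * n - 1)%:R.
    apply: (le_trans h); rewrite ler_pM2r ?invr_gt0 //.
    by rewrite (ler_nat R (G u0 v) 1).
  have -> : th = th * (n%:R)^-1 * n%:R by rewrite -mulrA mulVf // mulr1.
  rewrite [n%:R / _]mulrC ler_pM2r //.
  by move: h1; rewrite mul1r.
move=> h; have := le_trans hle h; rewrite leNgt hk //.
Qed.
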